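(* Let $\alpha_2\in\mathbb{C}$ and let $u(t)$ satisfy the fifth-order equation $$\frac{d^5u}{dt^5}=\frac{N}{48\left(\frac{du}{dt}\right)^2+8\frac{d^3u}{dt^3}-2t},$$ where $$N=(1-\alpha_2)\alpha_2-2u'\left(24u'^2-t\right)^2-24u''\left(u'-tu''\right)+8u'''\left(5u'\left(t-24u'^2\right)-12u''^2-16u'u'''\right)+2u''''\left(48u'u''+2u''''-1\right)$$ (primes denote $d/dt$). Define $$x=u,\quad y=u',\quad z=u'',\quad w=u'''-\frac14\left(t-24u'^2\right),\quad q=\frac{u''''-\frac{\alpha_2-24u'u''}{2}}{u'''-\frac14\left(t-24u'^2\right)} .$$ Then this birational change of variables takes the equation (written as a first-order system in $u,u',u'',u''',u''''$) into the polynomial system $$\frac{dx}{dt}=y,\quad \frac{dy}{dt}=z,\quad \frac{dz}{dt}=-6y^2+w+\frac t4,\quad \frac{dw}{dt}=wq+\frac{2\alpha_2-1}{4},\quad \frac{dq}{dt}=-\frac12q^2-4y .$$ *)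

(* Defs.v *)
From HB Require Import structures.
From mathcomp Require Import all_boot all_order all_algebra.
From mathcomp Require Import all_classical all_reals all_analysis.
Set Implicit Arguments. Unset Strict Implicit. Unset Printing Implicit Defensive.
Import Order.TTheory GRing.Theory Num.Theory.
Import numFieldNormedType.Exports.
Local Open Scope ring_scope.

(* Numerator N of the fifth-order equation, as a polynomial in
   a = alpha_2, t, and u1 = u', u2 = u'', u3 = u''', u4 = u''''. *)
Definition N5 (K : numFieldType) (a t u1 u2 u3 u4 : K) : K :=
  (1 - a) * a
  - 2 * u1 * (24 * u1 ^+ 2 - t) ^+ 2
  - 24 * u2 * (u1 - t * u2)
  + 8 * u3 * (5 * u1 * (t - 24 * u1 ^+ 2) - 12 * u2 ^+ 2 - 16 * u1 * u3)
  + 2 * u4 * (48 * u1 * u2 + 2 * u4 - 1).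

Definition D5 (K : numFieldType) (t u1 u3 : K) : K :=
  48 * u1 ^+ 2 + 8 * u3 - 2 * t.

(* Main.v *)
Require Import Defs.
From HB Require Import structures.
From mathcomp Require Import all_boot all_order all_algebra.
From mathcomp Require Import all_classical all_reals all_analysis.
From mathcomp Require Import ring.
Import Order.TTheory GRing.Theory Num.Theory.
Import numFieldNormedType.Exports.
Local Open Scope classical_set_scope.
Local Open Scope ring_scope.

Section Aux.
Variable K : numFieldType.
Implicit Types (f g : K -> K) (x c df dg : K).
Record isd x f df : Prop := Isd { isd_p : is_derive x 1 f df }.

Lemma isdB f g x df dg : isd x f df -> isd x g dg ->
  isd x (fun t => f t - g t) (df - dg).
Proof. move=> [H1] [H2]; constructor; exact: (@is_deriveB _ _ _ f g x 1 df dg). Qed.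

Lemma isdD f g x df dg : isd x f df -> isd x g dg ->
  isd x (fun t => f t + g t) (df + dg).
Proof. move=> [H1] [H2]; constructor; exact: (@is_deriveD _ _ _ f g x 1 df dg). Qed.

Lemma isdM f g x df dg : isd x f df -> isd x g dg ->
  isd x (fun t => f t * g t) (f x * dg + g x * df).
Proof. move=> [H1] [H2]; constructor; exact: (@is_deriveM _ _ f g x 1 df dg). Qed.

Lemma isdV f x df : f x != 0 -> isd x f df ->
  isd x (fun t => (f t)^-1) (- (f x) ^- 2 * df).
Proof.
move=> H0 [H]; constructor; apply: DeriveDef; first exact: derivableV.
by rewrite deriveV // derive_val.
Qed.

Lemma isdC c x : isd x (fun _ : K => c) 0.
Proof. constructor; exact: (@is_derive_cst _ K K c x 1). Qed.

Lemma isdId x : isd x (fun t : K => t) 1.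
Proof. constructor; exact: (@is_derive_id _ K x 1). Qed.

Lemma isdX f x df : isd x f df ->
  isd x (fun t => f t ^+ 2) (2 * f x * df).
Proof.
move=> H; have -> : (fun t => f t ^+ 2) = (fun t => f t * f t).
  by apply/funext => t; rewrite expr2.
have -> : 2 * f x * df = f x * df + f x * df by rewrite -mulrA mulr2n mulrDl mul1r.
exact: isdM.
Qed.

Lemma finish f x df r : isd x f df -> df = r ->
  derivable f x 1 /\ derive1 f x = r.
Proof. by move=> [H] <-; split; [exact: ex_derive | rewrite derive1E derive_val]. Qed.

Lemma nz4 (a b : K) : a - 4^-1 * b != 0 -> a * 4 - b != 0.
Proof.
move=> H; have -> : a * 4 - b = 4 * (a - 4^-1 * b).
  by rewrite mulrBr mulrA divff ?pnatr_eq0 // mul1r mulrC.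
by rewrite mulf_neq0 ?pnatr_eq0.
Qed.

End Aux.
Arguments isd {K}.

Theorem theorem9p1 (K : numClosedFieldType) (a2 : K) (u : K -> K) (D : set K) :
  open D ->
  (forall t, D t -> forall k, (k < 5)%N -> derivable (derive1n k u) t 1) ->
  (forall t, D t -> D5 t (derive1 u t) (derive1n 3 u t) != 0) ->
  (forall t, D t -> derive1n 3 u t - 4^-1 * (t - 24 * (derive1 u t) ^+ 2) != 0) ->
  (forall t, D t ->
     derive1n 5 u t = N5 a2 t (derive1 u t) (derive1n 2 u t) (derive1n 3 u t) (derive1n 4 u t)
                / D5 t (derive1 u t) (derive1n 3 u t)) ->
  let x := u in
  let y := derive1 u in
  let z := derive1n 2 u in
  let w := fun t => derive1n 3 u t - 4^-1 * (t - 24 * (derive1 u t) ^+ 2) in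
  let q := fun t => (derive1n 4 u t - (a2 - 24 * derive1 u t * derive1n 2 u t) / 2) / w t in
  forall t, D t ->
    [/\ derivable x t 1 /\ derive1 x t = y t,
        derivable y t 1 /\ derive1 y t = z t,
        derivable z t 1 /\ derive1 z t = - 6 * (y t) ^+ 2 + w t + t / 4,
        derivable w t 1 /\ derive1 w t = w t * q t + (2 * a2 - 1) / 4
      & derivable q t 1 /\ derive1 q t = - 2^-1 * (q t) ^+ 2 - 4 * y t].
Proof.
move=> _ Hd HD Hw H5 x y z w q t Dt.
have Hk : forall k, (k < 5)%N -> isd t (derive1n k u) (derive1n k.+1 u t).
  move=> k lk; constructor; have := derivableP (Hd t Dt k lk).
  by rewrite derive1nS derive1E.
have H0 : isd t u (derive1 u t) by exact: (Hk 0%N isT).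
have H1 : isd t (derive1 u) (derive1n 2 u t) by exact: (Hk 1%N isT).
have H2 := Hk 2%N isT; have H3 := Hk 3%N isT; have H4 := Hk 4%N isT.
have n2 : (2 : K) != 0 by rewrite pnatr_eq0.
have n4 : (4 : K) != 0 by rewrite pnatr_eq0.
have nw : w t != 0 := Hw t Dt.
have nD := HD t Dt.
have e5 := H5 t Dt.
have H2' : isd t (derive1 (derive1 u)) (derive1n 3 u t) by exact: H2.
Ltac dstep H0 H1 H2 Hk nw w :=
  match goal with
  | |- _ != 0 => exact nw
  | |- isd _ w _ => rewrite /w
  | |- isd _ (fun t => derive1n ?k _ t) _ => exact (Hk k isT)
  | |- isd _ (derive1n ?k _) _ => exact (Hk k isT)
  | |- isd _ (fun t => derive1 (derive1 _) t) _ => exact H2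
  | |- isd _ (derive1 (derive1 _)) _ => exact H2
  | |- isd _ (fun t => derive1 _ t) _ => exact H1
  | |- isd _ (derive1 _) _ => exact H1
  | |- isd _ (fun t => t) _ => apply: isdId
  | |- isd _ (fun _ => _) _ => apply: isdC
  | |- isd _ (fun t => _ - _) _ => eapply isdB
  | |- isd _ (fun t => _ + _) _ => eapply isdD
  | |- isd _ (fun t => _ ^+ 2) _ => eapply isdX
  | |- isd _ (fun t => _ * _) _ => eapply isdM
  | |- isd _ (fun t => (_)^-1) _ => eapply isdV
  end.
split.
- by eapply finish; [exact H0 | ].
- by eapply finish; [exact H1 | ].
- eapply finish; [exact H2 | ].
  rewrite /y /w; cbv beta; move: (derive1n 3 u t) (derive1 u t) => u3 u1.
  by field.
- eapply finish; first by rewrite /w; repeat dstep H0 H1 H2' Hk nw w.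
  move: nw nD e5; rewrite /q /w /D5 /N5; cbv beta.
  move: (derive1n 5 u t) => u5.
  move: (derive1n 4 u t) => u4.
  move: (derive1n 3 u t) => u3.
  move: (derive1n 2 u t) => u2.
  move: (derive1 u t) => u1.
  move=> nw nD e5.
  by field; exact: nz4.
- eapply finish; first by rewrite /q /w; repeat dstep H0 H1 H2' Hk nw w.
  move: nw nD e5; rewrite /q /w /y /D5 /N5; cbv beta.
  move: (derive1n 5 u t) => u5.
  move: (derive1n 4 u t) => u4.
  move: (derive1n 3 u t) => u3.
  move: (derive1n 2 u t) => u2.
  move: (derive1 u t) => u1.
  move=> nw nD ->.
  by field; rewrite nD andbT; exact: nz4.
Qed.
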